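(* Let $\pi$ be a projective plane of order $q$ and let $2\le n\le q$. Consider the complete bipartite graph $G=K_{n,q}$ with classes $U,V$, $|U|=n$, $|V|=q$. Then: (a) For $n=q$: $n_\pi(K_{q,q})=\binom{q^2+q+1}{2}$. (b) If $n<q$, and for every embedding $\phi$ of $K_{n,q}$ into $\pi$ the points of $\phi(V)$ lie on a line, then $n_\pi(K_{n,q})=2\binom{q^2+q+1}{2}\binom{q}{n}$. (c) If $n=q-1$, then for every embedding $\phi$ of $K_{q-1,q}$ into $\pi$ the points of $\phi(V)$ are collinear, and $n_\pi(K_{q-1,q})=q^2(q+1)(q^2+q+1)$.
   Context: A finite projective plane of order $q$ has $q^2+q+1$ points and lines, $q+1$ points on each line and $q+1$ lines through each point; any two distinct points lie on a unique line and any two lines meet in a unique point. An embedding of a simple graph $G=(V,E)$ into $\pi$ is an injective map $\phi$ from $V$ to the points of $\pi$ such that the induced map sending an edge $ab$ to the line through $\phi(a),\phi(b)$ is injective on $E$. Two embeddings $\phi,\psi$ are equivalent if $\psi=\phi\circ\alpha$ for some graph automorphism $\alpha$ of $G$; $n_\pi(G)$ is the number of equivalence classes of embeddings of $G$ into $\pi$ (equivalently, the number of distinct images, i.e. point sets $\phi(V)$ together with the line sets of embedded edges and induced incidence). *)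

(* Defs.v *)
From mathcomp Require Import all_boot all_order.
From mathcomp Require Import perm.
Set Implicit Arguments. Unset Strict Implicit. Unset Printing Implicit Defensive.

Definition proj_plane (q : nat) (P L : finType) (inc : P -> L -> bool) : Prop :=
  [/\ #|P| = q ^ 2 + q + 1, #|L| = q ^ 2 + q + 1,
      (forall l : L, #|[set p | inc p l]| = q.+1) /\
      (forall p : P, #|[set l | inc p l]| = q.+1),
      (forall p1 p2 : P, p1 != p2 -> exists! l : L, inc p1 l && inc p2 l) &
      (forall l1 l2 : L, l1 != l2 -> exists! p : P, inc p l1 && inc p l2)].

Definition line_through (P L : finType) (inc : P -> L -> bool) (p1 p2 : P)
  : option L := [pick l | inc p1 l && inc p2 l].

(* A simple graph on a finite vertex type V is given by a symmetric irreflexive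
   relation e; its edges are the unordered pairs [set a; b] with e a b. *)

(* Embedding: injective on vertices, and the induced edge -> line map is injective. *)
Definition embeddingb (P L : finType) (inc : P -> L -> bool) (V : finType)
  (e : rel V) (f : {ffun V -> P}) : bool :=
  injectiveb f &&
  [forall a, forall b, forall c, forall d,
     e a b ==> e c d ==>
     (line_through inc (f a) (f b) == line_through inc (f c) (f d)) ==>
     ([set a; b] == [set c; d])].

Definition embeddings (P L : finType) (inc : P -> L -> bool) (V : finType)
  (e : rel V) : {set {ffun V -> P}} := [set f | embeddingb inc e f].

Definition graph_aut (V : finType) (e : rel V) : {set {perm V}} :=
  [set s : {perm V} | [forall x, forall y, e (s x) (s y) == e x y]].

(* n_pi(G): number of equivalence classes of embeddings, phi ~ phi \o alpha. *)
Definition n_pi (P L : finType) (inc : P -> L -> bool) (V : finType) (e : rel V)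
  : nat :=
  #|[set [set [ffun x => f (s x)] | s : {perm V} in graph_aut e] | f : {ffun V -> P} in embeddings inc e]|.

(* Complete bipartite graph K_{n,m} with classes U = 'I_n (inl), V = 'I_m (inr). *)
Definition Kbip (n m : nat) : rel ('I_n + 'I_m)%type :=
  fun x y => match x, y with
             | inl _, inr _ | inr _, inl _ => true
             | _, _ => false
             end.
Arguments Kbip : clear implicits.

(* Main.v *)
Require Import Defs.
From mathcomp Require Import all_boot all_order perm.
From mathcomp Require Import zify.
Set Implicit Arguments. Unset Strict Implicit. Unset Printing Implicit Defensive.

Lemma card_imset_ker (T A B : finType) (E : {set T}) (a : T -> A) (b : T -> B) :
  {in E &, forall x y, (a x == a y) = (b x == b y)} -> #|a @: E| = #|b @: E|.
Proof.
move=> H; case: (set_0Vmem E) => [E0|[x0 x0E]].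
  by rewrite E0 (imset0 a) (imset0 b) !cards0.
pose c y := b (odflt x0 [pick x in E | a x == y]).
have hc x : x \in E -> c (a x) = b x.
  move=> xE; rewrite /c; case: pickP => [x' /andP[x'E /eqP e]|H'] /=.
    by apply/eqP; rewrite -H // e.
  by have := H' x; rewrite xE eqxx.
have -> : b @: E = c @: (a @: E).
  rewrite -imset_comp; apply: eq_in_imset => x xE /=; by rewrite hc.
have inj : {in a @: E &, injective c}.
  move=> y1 y2 /imsetP[x1 x1E ->] /imsetP[x2 x2E ->].
  by rewrite !hc // => /eqP; rewrite -H // => /eqP.
by rewrite [in RHS](card_in_imset inj).
Qed.

Lemma sum_card (T : finType) (p : pred T) : \sum_(x : T) (p x : nat) = #|[set x | p x]|.
Proof. by rewrite -sum1_card [RHS]big_mkcond /=; apply: eq_bigr => x _; rewrite inE; case: (p x). Qed.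

Lemma sum_pair (I J : finType) (F : I * J -> nat) : \sum_p F p = \sum_i \sum_j F (i, j).
Proof. by rewrite pair_bigA; apply: eq_bigr => -[i j] _. Qed.

Section Plane.
Variables (q : nat) (P L : finType) (inc : P -> L -> bool).
Hypothesis HP : proj_plane q inc.

Definition pts l := [set p | inc p l].

Lemma card_pts l : #|pts l| = q.+1.
Proof. by case: HP => _ _ [H _] _ _; apply: H. Qed.
Lemma card_lns p : #|[set l | inc p l]| = q.+1.
Proof. by case: HP => _ _ [_ H] _ _; apply: H. Qed.
Lemma card_L : #|L| = q ^ 2 + q + 1.
Proof. by case: HP. Qed.

Lemma line_uniq p1 p2 l l' : p1 != p2 -> inc p1 l -> inc p2 l ->
  inc p1 l' -> inc p2 l' -> l = l'.
Proof.
move=> ne h1 h2 h1' h2'; case: HP => _ _ _ H _.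
case: (H _ _ ne) => l0 [_ U].
have e1 : l0 = l by apply: U; rewrite h1 h2.
have e2 : l0 = l' by apply: U; rewrite h1' h2'.
by rewrite -e1 -e2.
Qed.

Lemma point_uniq l1 l2 p p' : l1 != l2 -> inc p l1 -> inc p l2 ->
  inc p' l1 -> inc p' l2 -> p = p'.
Proof.
move=> ne h1 h2 h1' h2'; case: HP => _ _ _ _ H.
case: (H _ _ ne) => p0 [_ U].
have e1 : p0 = p by apply: U; rewrite h1 h2.
have e2 : p0 = p' by apply: U; rewrite h1' h2'.
by rewrite -e1 -e2.
Qed.

Lemma ex_line p1 p2 : exists l, inc p1 l && inc p2 l.
Proof.
case: (eqVneq p1 p2) => [<-|ne].
  have : 0 < #|[set l | inc p1 l]| by rewrite card_lns.
  by case/card_gt0P => l; rewrite inE => h; exists l; rewrite h.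
case: HP => _ _ _ H _; case: (H _ _ ne) => l [h _]; by exists l.
Qed.

Lemma ex_point l1 l2 : l1 != l2 -> exists p, inc p l1 && inc p l2.
Proof. move=> ne; case: HP => _ _ _ _ H; case: (H _ _ ne) => p [h _]; by exists p. Qed.

Lemma lt_some p1 p2 l : p1 != p2 -> inc p1 l -> inc p2 l ->
  line_through inc p1 p2 = Some l.
Proof.
move=> ne h1 h2; rewrite /line_through; case: pickP => [l' /andP[h1' h2'] | H].
  by rewrite (line_uniq ne h1' h2' h1 h2).
by have := H l; rewrite h1 h2.
Qed.

Lemma lt_inc p1 p2 l : line_through inc p1 p2 = Some l -> inc p1 l && inc p2 l.
Proof. by rewrite /line_through; case: pickP => [l0 H [<-] | ]. Qed.

Lemma card_ptsD l m : l != m -> #|pts m :\: pts l| = q.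
Proof.
move=> ne; rewrite cardsD card_pts.
have [p /andP[hl hm]] := ex_point ne.
suff -> : pts m :&: pts l = [set p] by rewrite cards1 subn1.
apply/setP => x; rewrite !inE; apply/andP/eqP => [[xm xl]|->]; last by rewrite hl hm.
exact: (point_uniq ne xl xm hl hm).
Qed.

Definition isl (T1 T2 : Type) (x : T1 + T2) : bool := if x is inl _ then true else false.

Lemma KbipE n m x y : Kbip n m x y = (isl x != isl y).
Proof. by case: x; case: y. Qed.

Definition good n (f : {ffun 'I_n + 'I_q -> P}) :=
  [/\ injective f,
   (forall i j j' l, j != j' -> inc (f (inl i)) l -> inc (f (inr j)) l ->
      inc (f (inr j')) l -> False) &
   (forall i i' j l, i != i' -> inc (f (inl i)) l -> inc (f (inl i')) l ->
      inc (f (inr j)) l -> False)].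

Lemma uv_eq n (f : {ffun 'I_n + 'I_q -> P}) i j i' j' l : good f ->
  inc (f (inl i)) l -> inc (f (inr j)) l -> inc (f (inl i')) l -> inc (f (inr j')) l ->
  i = i' /\ j = j'.
Proof.
case=> _ F1 F2 h1 h2 h3 h4.
have ei : i = i' by case: (eqVneq i i') => // ne; case: (F2 _ _ _ _ ne h1 h3 h2).
subst i'; split => //.
by case: (eqVneq j j') => // ne; case: (F1 _ _ _ _ ne h1 h2 h4).
Qed.

Lemma embP n (f : {ffun 'I_n + 'I_q -> P}) :
  f \in embeddings inc (Kbip n q) <-> good f.
Proof.
rewrite inE /embeddingb; split.
- case/andP => /injectiveP finj /forallP H; split => //.
  + move=> i j j' l ne hu hv hv'.
    have /forallP/(_ (inr j))/forallP/(_ (inl i))/forallP/(_ (inr j')) := H (inl i).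
    have n1 : f (inl i) != f (inr j) by rewrite (inj_eq finj).
    have n2 : f (inl i) != f (inr j') by rewrite (inj_eq finj).
    rewrite /= (lt_some n1 hu hv) (lt_some n2 hu hv') eqxx /=.
    move/eqP/setP/(_ (inr j)); rewrite !inE /=.
    by rewrite eqxx => /esym/eqP [e]; rewrite e eqxx in ne.
  + move=> i i' j l ne hu hu' hv.
    have /forallP/(_ (inr j))/forallP/(_ (inl i'))/forallP/(_ (inr j)) := H (inl i).
    have n1 : f (inl i) != f (inr j) by rewrite (inj_eq finj).
    have n2 : f (inl i') != f (inr j) by rewrite (inj_eq finj).
    rewrite /= (lt_some n1 hu hv) (lt_some n2 hu' hv) eqxx /=.
    move/eqP/setP/(_ (inl i)); rewrite !inE /= eqxx /=.
    by move/esym/orP => [/eqP [e] | /eqP //]; rewrite e eqxx in ne.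
- case=> finj F1 F2; apply/andP; split; first by apply/injectiveP.
  apply/forallP => a; apply/forallP => b; apply/forallP => c; apply/forallP => d.
  apply/implyP => eab; apply/implyP => ecd; apply/implyP => /eqP el.
  have nab : f a != f b.
    by rewrite (inj_eq finj); apply/eqP => eq; move: eab; rewrite eq KbipE eqxx.
  have [l /andP[ha hb]] := ex_line (f a) (f b).
  rewrite (lt_some nab ha hb) in el.
  have /andP[hc hd] := lt_inc (esym el).
  have G : good f by [].
  clear nab el; apply/eqP; move: eab ecd ha hb hc hd.
  case: a => [i|j]; case: b => [i'|j'] //= _;
  case: c => [i2|j2]; case: d => [i3|j3] //= _ h1 h2 h3 h4.
  + by case: (uv_eq G h1 h2 h3 h4) => -> ->.
  + by case: (uv_eq G h1 h2 h4 h3) => -> ->; rewrite setUC.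
  + by case: (uv_eq G h2 h1 h3 h4) => -> ->; rewrite setUC.
  + by case: (uv_eq G h2 h1 h4 h3) => -> ->.
Qed.


Definition fU n (f : {ffun 'I_n + 'I_q -> P}) := [set f (inl i) | i : 'I_n].
Definition fV n (f : {ffun 'I_n + 'I_q -> P}) := [set f (inr j) | j : 'I_q].

Lemma card_fU n (f : {ffun 'I_n + 'I_q -> P}) : injective f -> #|fU f| = n.
Proof. by move=> finj; rewrite card_imset ?card_ord // => i i' /finj []. Qed.
Lemma card_fV n (f : {ffun 'I_n + 'I_q -> P}) : injective f -> #|fV f| = q.
Proof. by move=> finj; rewrite card_imset ?card_ord // => i i' /finj []. Qed.

Lemma config n (f : {ffun 'I_n + 'I_q -> P}) l : 1 < n -> 1 < q -> good f ->
  (forall j, inc (f (inr j)) l) ->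
  exists m, [/\ l != m, fV f = pts l :\: pts m & fU f \subset pts m :\: pts l].
Proof.
move=> Hn Hq G hl; have G' := G; case: G' => finj F1 F2.
pose i0 : 'I_n := Ordinal (ltnW Hn). pose i1 : 'I_n := Ordinal Hn.
pose j0 : 'I_q := Ordinal (ltnW Hq). pose j1 : 'I_q := Ordinal Hq.
have uoff i : ~~ inc (f (inl i)) l.
  by apply/negP => h; apply: (F1 i j0 j1 l) => //.
have fVl : fV f \subset pts l by apply/subsetP => p /imsetP[j _ ->]; rewrite inE.
have : #|pts l :\: fV f| == 1.
  by rewrite cardsD (setIidPr fVl) card_pts card_fV // subSnn.
case/cards1P => Z HZ.
have hZ X : inc X l -> X \notin fV f -> X = Z.
  by move=> h1 h2; apply/set1P; rewrite -HZ !inE h1 h2.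
have Zl : inc Z l.
  by have : Z \in [set Z] := set11 Z; rewrite -HZ !inE => /andP[_ ->].
have u0Z : f (inl i0) != Z by apply: contraNneq (uoff i0) => ->.
have [m /andP[mu0 mZ]] := ex_line (f (inl i0)) Z.
have um i : inc (f (inl i)) m.
  case: (eqVneq i i0) => [-> //|ne].
  have nu : f (inl i0) != f (inl i).
    by rewrite (inj_eq finj); apply/eqP => -[e]; rewrite e eqxx in ne.
  have [k /andP[k0 ki]] := ex_line (f (inl i0)) (f (inl i)).
  have kl : k != l by apply: contraNneq (uoff i0) => <-.
  have [X /andP[Xk Xl]] := ex_point kl.
  have XnV : X \notin fV f.
    apply/imsetP => -[j _ eX]; subst X.
    by apply: (F2 i0 i j k) => //; rewrite eq_sym.
  have eXZ := hZ X Xl XnV; subst X.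
  by rewrite (line_uniq u0Z mu0 mZ k0 Xk).
have lm : l != m by apply: contraNneq (uoff i0) => ->; exact: um.
have ml : m != l by rewrite eq_sym.
exists m; split => //.
- apply/eqP; rewrite eqEcard card_fV // (card_ptsD (ml : m != l)).
  apply/andP; split; last by [].
  apply/subsetP => p /imsetP[j _ ->]; rewrite !inE hl andbT.
  by apply/negP => h; apply: (F2 i0 i1 j m).
- by apply/subsetP => p /imsetP[i _ ->]; rewrite !inE um (uoff i).
Qed.

Lemma collinear n (f : {ffun 'I_n + 'I_q -> P}) : 1 < n -> 1 < q -> q <= n.+1 ->
  good f -> exists l, forall j, inc (f (inr j)) l.
Proof.
move=> Hn Hq Hqn G; case: G => finj F1 F2.
pose i0 : 'I_n := Ordinal (ltnW Hn). pose i1 : 'I_n := Ordinal Hn.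
pose j0 : 'I_q := Ordinal (ltnW Hq). pose j1 : 'I_q := Ordinal Hq.
set u0 := f (inl i0).
have [m /andP[m0 m1]] := ex_line u0 (f (inl i1)).
have vnm j : ~~ inc (f (inr j)) m by apply/negP => h; apply: (F2 i0 i1 j m).
pose phi j := odflt m (line_through inc u0 (f (inr j))).
have hphi j : inc u0 (phi j) && inc (f (inr j)) (phi j).
  have ne : u0 != f (inr j) by rewrite (inj_eq finj).
  have [k /andP[h1 h2]] := ex_line u0 (f (inr j)).
  by rewrite /phi (lt_some ne h1 h2) /= h1 h2.
have phi_inj : injective phi.
  move=> j j' e; case: (eqVneq j j') => // ne; exfalso.
  have /andP[a1 a2] := hphi j; have /andP[b1 b2] := hphi j'.
  by apply: (F1 i0 j j' (phi j) ne a1 a2); rewrite e.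
have mnot : m \notin [set phi j | j : 'I_q].
  apply/imsetP => -[j _ e]; have /andP[a1 a2] := hphi j.
  by apply: (F2 i0 i1 j m) => //; rewrite e.
have lnsE : [set l | inc u0 l] = m |: [set phi j | j : 'I_q].
  apply/eqP; rewrite eq_sym eqEcard cardsU1 mnot card_imset // card_ord card_lns.
  apply/andP; split; last by [].
  apply/subsetP => k; rewrite !inE => /orP[/eqP -> // | /imsetP[j _ ->]].
  by case/andP: (hphi j).
have um i : inc (f (inl i)) m.
  case: (eqVneq i i0) => [-> //|ne].
  have [k /andP[k0 ki]] := ex_line u0 (f (inl i)).
  have : k \in [set l | inc u0 l] by rewrite inE.
  rewrite lnsE !inE => /orP[/eqP <- // | /imsetP[j _ ek]].
  have /andP[_ a2] := hphi j; exfalso; apply: (F2 i0 i j k) => //.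
    by rewrite eq_sym.
  by rewrite ek.
pose W := pts m :\: fU f.
have cW : #|W| <= 2.
  have fUm : fU f \subset pts m by apply/subsetP => p /imsetP[i _ ->]; rewrite inE um.
  rewrite cardsD (setIidPr fUm) card_pts card_fU //; lia.
have inW j j' k X : j != j' -> inc (f (inr j)) k -> inc (f (inr j')) k ->
    inc X k -> inc X m -> X \in W.
  move=> ne h1 h2 hk hm; rewrite !inE hm andbT; apply/imsetP => -[i _ eX]; subst X.
  exact: (F1 i j j' k ne hk h1 h2).
have v01 : f (inr j0) != f (inr j1) by rewrite (inj_eq finj).
have [l /andP[l0 l1]] := ex_line (f (inr j0)) (f (inr j1)).
exists l => j.
apply/negPn/negP => hj.
have ne0 : j != j0 by apply: contraNneq hj => ->.
have ne1 : j != j1 by apply: contraNneq hj => ->.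
have lm : l != m by apply: contraNneq (vnm j0) => <-.
have [X0 /andP[X0l X0m]] := ex_point lm.
have W0 : X0 \in W by apply: (inW j0 j1 l) => //.
have [k1 /andP[k1j k10]] := ex_line (f (inr j)) (f (inr j0)).
have k1m : k1 != m by apply: contraNneq (vnm j) => <-.
have [X1 /andP[X1k X1m]] := ex_point k1m.
have W1 := inW j j0 k1 X1 ne0 k1j k10 X1k X1m.
have [k2 /andP[k2j k21]] := ex_line (f (inr j)) (f (inr j1)).
have k2m : k2 != m by apply: contraNneq (vnm j) => <-.
have [X2 /andP[X2k X2m]] := ex_point k2m.
have W2 := inW j j1 k2 X2 ne1 k2j k21 X2k X2m.
have X10 : X1 != X0.
  apply/eqP => e; subst X1.
  have v0X : f (inr j0) != X0 by apply: contraNneq (vnm j0) => ->.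
  have ek := line_uniq v0X k10 X1k l0 X0l.
  by rewrite -ek k1j in hj.
have X20 : X2 != X0.
  apply/eqP => e; subst X2.
  have v1X : f (inr j1) != X0 by apply: contraNneq (vnm j1) => ->.
  have ek := line_uniq v1X k21 X2k l1 X0l.
  by rewrite -ek k2j in hj.
have X12 : X1 = X2.
  apply/eqP; apply/negPn/negP => ne12.
  have : #|X0 |: [set X1; X2]| <= #|W|.
    apply: subset_leq_card; apply/subsetP => x.
    by case/setU1P => [->|/set2P[]->].
  rewrite cardsU1 cards2 !inE (eq_sym X0 X1) (eq_sym X0 X2) (negbTE X10) (negbTE X20) ne12 /=.
  move=> h; have := leq_trans h cW; by [].
subst X2.
have vX : f (inr j) != X1 by apply: contraNneq (vnm j) => ->.
have e12 := line_uniq vX k1j X1k k2j X2k; subst k2.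
have e1l := line_uniq v01 k10 k21 l0 l1; subst k1.
by rewrite k1j in hj.
Qed.


Definition Aut n := graph_aut (Kbip n q).

Lemma AutP n (s : {perm 'I_n + 'I_q}) :
  reflect (forall x y, (isl (s x) != isl (s y)) = (isl x != isl y)) (s \in Aut n).
Proof.
rewrite inE; apply: (iffP forallP) => [H x y | H x].
  by have /forallP/(_ y)/eqP := H x; rewrite !KbipE.
by apply/forallP => y; rewrite !KbipE H.
Qed.

Lemma Aut1 n : (1 : {perm 'I_n + 'I_q})%g \in Aut n.
Proof. by apply/AutP => x y; rewrite !perm1. Qed.

Lemma AutM n (s t : {perm 'I_n + 'I_q}) : s \in Aut n -> t \in Aut n -> (s * t)%g \in Aut n.
Proof. by move=> /AutP Hs /AutP Ht; apply/AutP => x y; rewrite !permM Ht Hs. Qed.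

Lemma AutV n (s : {perm 'I_n + 'I_q}) : s \in Aut n -> (s^-1)%g \in Aut n.
Proof.
move=> /AutP Hs; apply/AutP => x y.
by have := Hs (s^-1 x)%g (s^-1 y)%g; rewrite !permKV => ->.
Qed.

Lemma Aut_cases n (s : {perm 'I_n + 'I_q}) (x0 : 'I_n + 'I_q) : s \in Aut n ->
  exists c, forall x, isl (s x) = isl x (+) c.
Proof.
move=> /AutP H; exists (isl (s x0) (+) isl x0) => x.
move: (H x x0); case: (isl (s x)); case: (isl (s x0)); case: (isl x); by case: (isl x0).
Qed.

Definition fS n (f : {ffun 'I_n + 'I_q -> P}) b := [set f x | x in [set x | isl x == b]].

Lemma fUE n (f : {ffun 'I_n + 'I_q -> P}) : fU f = fS f true.
Proof.
apply/setP => p; apply/imsetP/imsetP => [[i _ ->]|[x]]; first by exists (inl i); rewrite ?inE.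
by rewrite inE; case: x => // i _ ->; exists i.
Qed.

Lemma fVE n (f : {ffun 'I_n + 'I_q -> P}) : fV f = fS f false.
Proof.
apply/setP => p; apply/imsetP/imsetP => [[i _ ->]|[x]]; first by exists (inr i); rewrite ?inE.
by rewrite inE; case: x => // i _ ->; exists i.
Qed.

Lemma fS_comp n (f : {ffun 'I_n + 'I_q -> P}) (s : {perm 'I_n + 'I_q}) c b :
  (forall x, isl (s x) = isl x (+) c) ->
  fS [ffun x => f (s x)] b = fS f (b (+) c).
Proof.
move=> H; apply/setP => p; apply/imsetP/imsetP => [[x]|[y]].
  rewrite inE => /eqP hx ->; exists (s x); last by rewrite ffunE.
  by rewrite inE H hx.
rewrite inE => /eqP hy ->; exists (s^-1 y)%g; last by rewrite ffunE permKV.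
rewrite inE; have := H (s^-1 y)%g; rewrite permKV hy => e.
by apply/eqP; move: e; clear hy H; case: b; case: c; case: (isl _).
Qed.

Lemma xor_neq (a b c : bool) : (a (+) c != b (+) c) = (a != b).
Proof. by case: a; case: b; case: c. Qed.

Lemma mkperm n (f g : {ffun 'I_n + 'I_q -> P}) c : injective f -> injective g ->
  (forall x, exists y, g x = f y /\ isl y = isl x (+) c) ->
  exists2 s, s \in Aut n & g = [ffun x => f (s x)].
Proof.
move=> finj ginj H.
pose s0 x := odflt x [pick y | f y == g x].
have hs0 x : g x = f (s0 x) /\ isl (s0 x) = isl x (+) c.
  have [y [e hy]] := H x; rewrite /s0; case: pickP => [y' /eqP e'|H'].
    by have ey := finj _ _ (etrans e' e); subst y'.
  by have := H' y; rewrite e eqxx.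
have s0inj : injective s0.
  by move=> x x' e; apply: ginj; rewrite (hs0 x).1 (hs0 x').1 e.
exists (perm s0inj).
  apply/AutP => x y; rewrite !permE (hs0 x).2 (hs0 y).2.
  by rewrite xor_neq.
by apply/ffunP => x; rewrite ffunE permE (hs0 x).1.
Qed.

Lemma fS_mkperm n (f g : {ffun 'I_n + 'I_q -> P}) c : injective f -> injective g ->
  (forall b, fS g b = fS f (b (+) c)) ->
  exists2 s, s \in Aut n & g = [ffun x => f (s x)].
Proof.
move=> finj ginj H; apply: (mkperm (c := c)) => // x.
have : g x \in fS g (isl x) by apply: imset_f; rewrite inE.
by rewrite H => /imsetP[y]; rewrite inE => /eqP hy ->; exists y.
Qed.

Definition orb n (f : {ffun 'I_n + 'I_q -> P}) := [set [ffun x => f (s x)] | s : {perm 'I_n + 'I_q} in Aut n].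

Lemma orb_self n (f : {ffun 'I_n + 'I_q -> P}) : f \in orb f.
Proof. by apply/imsetP; exists 1%g; [exact: Aut1 | apply/ffunP => x; rewrite ffunE perm1]. Qed.

Lemma orb_comp n (f : {ffun 'I_n + 'I_q -> P}) s : s \in Aut n ->
  orb [ffun x => f (s x)] = orb f.
Proof.
move=> hs; apply/setP => g; apply/imsetP/imsetP => [[t ht ->]|[t ht ->]].
  exists (t * s)%g; first exact: AutM.
  by apply/ffunP => x; rewrite !ffunE permM.
exists (t * s^-1)%g; first by apply: AutM => //; exact: AutV.
by apply/ffunP => x; rewrite !ffunE permM permKV.
Qed.


Lemma card_D n : #|[set x : L * L * {set P} | [&& x.1.1 != x.1.2, x.2 \subset pts x.1.2 :\: pts x.1.1 & #|x.2| == n]]| = #|L| * (#|L|).-1 * 'C(q, n).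
Proof.
rewrite -sum_card sum_pair.
transitivity (\sum_(p : L * L) ((p.1 != p.2) : nat) * 'C(q, n)).
  apply: eq_bigr => -[l m] _ /=.
  case: (eqVneq l m) => [->|lm] /=; first by rewrite big1.
  by rewrite mul1n sum_card cards_draws card_ptsD.
rewrite -big_distrl /= sum_pair /=.
congr (_ * _).
transitivity (\sum_(l : L) #|L|.-1).
  apply: eq_bigr => l _.
  rewrite sum_card -(cardsC1 l).
  by apply: eq_card => m; rewrite !inE eq_sym.
by rewrite sum_nat_const mulnC.
Qed.

Variable l0 : L.
Definition lineof (S : {set P}) := odflt l0 [pick l | S \subset pts l].

Lemma lineof_eq (S : {set P}) l x y : S \subset pts l -> x \in S -> y \in S -> x != y -> lineof S = l.
Proof.
move=> Sl xS yS ne; rewrite /lineof; case: pickP => [l' Sl'|H] /=.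
  have := subsetP Sl' x xS; have := subsetP Sl' y yS.
  have := subsetP Sl x xS; have := subsetP Sl y yS; rewrite !inE => h1 h2 h3 h4.
  exact: (line_uniq ne h4 h3 h2 h1).
by have := H l; rewrite Sl.
Qed.

Lemma conv n (f : {ffun 'I_n + 'I_q -> P}) l m : l != m -> injective f ->
  fU f \subset pts m :\: pts l -> fV f \subset pts l :\: pts m -> good f.
Proof.
move=> lm finj hU hV.
have hu i : ~~ inc (f (inl i)) l && inc (f (inl i)) m.
  have /subsetP/(_ (f (inl i))) := hU; rewrite !inE; apply.
  by apply/imsetP; exists i.
have hv j : ~~ inc (f (inr j)) m && inc (f (inr j)) l.
  have /subsetP/(_ (f (inr j))) := hV; rewrite !inE; apply.
  by apply/imsetP; exists j.
split => //.
- move=> i j j' k ne h1 h2 h3.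
  have ne' : f (inr j) != f (inr j').
    by rewrite (inj_eq finj); apply/eqP => -[e]; rewrite e eqxx in ne.
  have /andP[_ vl] := hv j; have /andP[_ vl'] := hv j'.
  have e := line_uniq ne' h2 h3 vl vl'; subst k.
  by case/andP: (hu i) => /negP.
- move=> i i' j k ne h1 h2 h3.
  have ne' : f (inl i) != f (inl i').
    by rewrite (inj_eq finj); apply/eqP => -[e]; rewrite e eqxx in ne.
  have /andP[_ um] := hu i; have /andP[_ um'] := hu i'.
  have e := line_uniq ne' h1 h2 um um'; subst k.
  by case/andP: (hv j) => /negP.
Qed.

Lemma set_enum (A : {set P}) : exists g : 'I_#|A| -> P, injective g /\ [set g i | i : 'I_#|A|] = A.
Proof.
exists (fun i => enum_val i); split; first exact: enum_val_inj.
apply/setP => x; apply/imsetP/idP => [[i _ ->]|xA]; first exact: enum_valP.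
by exists (enum_rank_in xA x); rewrite ?enum_rankK_in.
Qed.

Lemma build n (A B : {set P}) : #|A| = n -> #|B| = q -> (forall p, p \in A -> p \notin B) ->
  exists f : {ffun 'I_n + 'I_q -> P}, [/\ injective f, fU f = A & fV f = B].
Proof.
move=> cA cB dAB.
have := set_enum A; rewrite cA => -[gA [gAi gAE]].
have := set_enum B; rewrite cB => -[gB [gBi gBE]].
have inA i : gA i \in A by rewrite -gAE; apply/imsetP; exists i.
have inB j : gB j \in B by rewrite -gBE; apply/imsetP; exists j.
exists [ffun x => match x with inl i => gA i | inr j => gB j end]; split.
- move=> [i|j] [i'|j']; rewrite !ffunE => e.
  + by rewrite (gAi _ _ e).
  + by have := dAB _ (inA i); rewrite e inB.
  + by have := dAB _ (inA i'); rewrite -e inB.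
  + by rewrite (gBi _ _ e).
- by rewrite -gAE; apply: eq_imset => i; rewrite ffunE.
- by rewrite -gBE; apply: eq_imset => i; rewrite ffunE.
Qed.

Lemma n_pi_h n (X : finType) (h : {ffun 'I_n + 'I_q -> P} -> X) :
  (forall f s, f \in embeddings inc (Kbip n q) -> s \in Aut n -> h [ffun x => f (s x)] = h f) ->
  (forall f g, f \in embeddings inc (Kbip n q) -> g \in embeddings inc (Kbip n q) -> h f = h g ->
     exists2 s, s \in Aut n & g = [ffun x => f (s x)]) ->
  n_pi inc (Kbip n q) = #|h @: embeddings inc (Kbip n q)|.
Proof.
move=> Hinv Hker.
have -> : n_pi inc (Kbip n q) = #|[set orb f | f in embeddings inc (Kbip n q)]| by [].
apply: card_imset_ker => f g fE gE; apply/eqP/eqP => [e|e].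
- have : f \in orb g by rewrite -e orb_self.
  by case/imsetP => s hs ->; rewrite Hinv.
- by have [s hs ->] := Hker f g fE gE e; rewrite orb_comp.
Qed.


Lemma two_lineV n (f : {ffun 'I_n + 'I_q -> P}) l : 1 < q -> injective f ->
  fV f \subset pts l -> lineof (fV f) = l.
Proof.
move=> Hq finj Sl.
pose j0 : 'I_q := Ordinal (ltnW Hq). pose j1 : 'I_q := Ordinal Hq.
apply: (lineof_eq (x := f (inr j0)) (y := f (inr j1))) => //.
- by apply/imsetP; exists j0.
- by apply/imsetP; exists j1.
- by rewrite (inj_eq finj).
Qed.

Lemma two_lineU n (f : {ffun 'I_n + 'I_q -> P}) l : 1 < n -> injective f ->
  fU f \subset pts l -> lineof (fU f) = l.
Proof.
move=> Hn finj Sl.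
pose i0 : 'I_n := Ordinal (ltnW Hn). pose i1 : 'I_n := Ordinal Hn.
apply: (lineof_eq (x := f (inl i0)) (y := f (inl i1))) => //.
- by apply/imsetP; exists i0.
- by apply/imsetP; exists i1.
- by rewrite (inj_eq finj).
Qed.

Lemma count_b n : 1 < n -> n < q ->
  (forall f : {ffun 'I_n + 'I_q -> P}, f \in embeddings inc (Kbip n q) ->
     exists l, forall v, inc (f (inr v)) l) ->
  n_pi inc (Kbip n q) = #|L| * (#|L|).-1 * 'C(q, n).
Proof.
move=> Hn Hnq Hcol.
have Hq : 1 < q := ltn_trans Hn Hnq.
pose i0 : 'I_n := Ordinal (ltnW Hn).
set E := embeddings inc (Kbip n q).
have cfg f : f \in E -> [/\ injective f, lineof (fV f) != lineof (fU f),
    fV f = pts (lineof (fV f)) :\: pts (lineof (fU f)) &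
    fU f \subset pts (lineof (fU f)) :\: pts (lineof (fV f))].
  move=> fE; have /embP G := fE.
  have [l hl] := Hcol f fE.
  have [m [lm eV eU]] := config Hn Hq G hl.
  case: G => finj _ _.
  have hV : fV f \subset pts l by rewrite eV subsetDl.
  have hU : fU f \subset pts m by apply: subset_trans eU (subsetDl _ _).
  by rewrite (two_lineV Hq finj hV) (two_lineU Hn finj hU).
pose h := fun f : {ffun 'I_n + 'I_q -> P} => (lineof (fV f), lineof (fU f), fU f).
have Hinv f s : f \in E -> s \in Aut n -> h [ffun x => f (s x)] = h f.
  move=> fE hs; have [c Hc] := Aut_cases (inl i0) hs.
  have c0 : c = false.
    case: c Hc => // Hc; exfalso.
    have hl j : exists i, s (inr j) = inl i.
      have := Hc (inr j); case: (s (inr j)) => [i _|k /= e]; first by exists i.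
      by [].
    pose g (j : 'I_q) : 'I_n := if s (inr j) is inl i then i else i0.
    have gE j : s (inr j) = inl (g j) by have [i ei] := hl j; rewrite /g ei.
    have gi : injective g.
      by move=> j j' e; have := gE j; rewrite e -gE => /perm_inj [].
    by have := leq_card g gi; rewrite !card_ord leqNgt Hnq.
  by rewrite /h /= !fUE !fVE !(@fS_comp n f s c _ Hc) c0.
have Hker f g : f \in E -> g \in E -> h f = h g ->
    exists2 s, s \in Aut n & g = [ffun x => f (s x)].
  move=> fE gE; rewrite /h => -[eV eU eUs].
  have [finj _ eVf _] := cfg f fE; have [ginj _ eVg _] := cfg g gE.
  apply: (fS_mkperm (c := false)) => // b; rewrite addbF; case: b.
    by rewrite -!fUE eUs.
  by rewrite -!fVE eVg eVf eV eU.
rewrite (n_pi_h Hinv Hker) -(card_D n).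
apply: eq_card => x; apply/imsetP/idP.
  move=> [f fE ->]; have [finj lm eV eU] := cfg f fE.
  by rewrite inE /= lm eU card_fU // eqxx.
rewrite inE; case: x => [[l m] A] /= /and3P[lm hA /eqP cA].
have ml : m != l by rewrite eq_sym.
have dAB p : p \in A -> p \notin pts l :\: pts m.
  move=> pA; have := subsetP hA p pA; rewrite !inE => /andP[/negbTE -> _].
  by rewrite andbF.
have [f [finj eU eV]] := build cA (card_ptsD ml) dAB.
have fE : f \in E.
  by apply/embP; apply: (conv lm finj); [rewrite eU | rewrite eV].
exists f => //.
have hV : fV f \subset pts l by rewrite eV subsetDl.
have hU : fU f \subset pts m by rewrite eU; apply: subset_trans hA (subsetDl _ _).
by rewrite /h (two_lineV Hq finj hV) (two_lineU Hn finj hU) eU.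
Qed.


Lemma set2_eq (T : finType) (a b c d : T) : a != b -> [set a; b] = [set c; d] ->
  (a = c /\ b = d) \/ (a = d /\ b = c).
Proof.
move=> ab e.
have ha : a \in [set c; d] by rewrite -e set21.
have hb : b \in [set c; d] by rewrite -e set22.
case/set2P: ha => ea; case/set2P: hb => eb; subst.
- by rewrite eqxx in ab.
- by left.
- by right.
- by rewrite eqxx in ab.
Qed.

Lemma count_a : 1 < q -> n_pi inc (Kbip q q) = 'C(#|L|, 2).
Proof.
move=> Hq.
set E := embeddings inc (Kbip q q).
pose i0 : 'I_q := Ordinal (ltnW Hq).
have cfg f : f \in E -> [/\ injective f, lineof (fV f) != lineof (fU f),
    fV f = pts (lineof (fV f)) :\: pts (lineof (fU f)) &
    fU f = pts (lineof (fU f)) :\: pts (lineof (fV f))].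
  move=> fE; have /embP G := fE.
  have [l hl] := collinear Hq Hq (leqnSn q) G.
  have [m [lm eV eU]] := config Hq Hq G hl.
  case: G => finj _ _.
  have hV : fV f \subset pts l by rewrite eV subsetDl.
  have hU : fU f \subset pts m by apply: subset_trans eU (subsetDl _ _).
  rewrite (two_lineV Hq finj hV) (two_lineU Hq finj hU); split => //.
  apply/eqP; rewrite eqEcard eU /= card_fU // card_ptsD //.
pose h := fun f : {ffun 'I_q + 'I_q -> P} => [set lineof (fV f); lineof (fU f)].
have Hinv f s : f \in E -> s \in Aut q -> h [ffun x => f (s x)] = h f.
  move=> fE hs; have [c Hc] := Aut_cases (inl i0) hs.
  rewrite /h !fUE !fVE !(@fS_comp q f s c _ Hc).
  by case: c Hc => _ //=; rewrite setUC.
have Hker f g : f \in E -> g \in E -> h f = h g ->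
    exists2 s, s \in Aut q & g = [ffun x => f (s x)].
  move=> fE gE; rewrite /h => e.
  have [finj lmf eVf eUf] := cfg f fE; have [ginj lmg eVg eUg] := cfg g gE.
  case: (set2_eq lmf e) => -[e1 e2].
    apply: (fS_mkperm (c := false)) => // b; rewrite addbF; case: b.
      by rewrite -!fUE eUg eUf e1 e2.
    by rewrite -!fVE eVg eVf e1 e2.
  apply: (fS_mkperm (c := true)) => // b; case: b => /=.
    by rewrite -fUE -fVE eUg eVf e1 e2.
  by rewrite -fUE -fVE eVg eUf e1 e2.
rewrite (n_pi_h Hinv Hker) -card_draws.
apply: eq_card => x; apply/imsetP/idP.
  by move=> [f fE ->]; have [finj lm _ _] := cfg f fE; rewrite inE cards2 lm.
rewrite inE => /cards2P [l [m [lm ->]]].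
have ml : m != l by rewrite eq_sym.
have dAB p : p \in pts m :\: pts l -> p \notin pts l :\: pts m.
  by rewrite !inE => /andP[/negbTE -> _]; rewrite andbF.
have [f [finj eU eV]] := build (card_ptsD lm) (card_ptsD ml) dAB.
have fE : f \in E.
  by apply/embP; apply: (conv lm finj); [rewrite eU | rewrite eV].
exists f => //.
have hV : fV f \subset pts l by rewrite eV subsetDl.
have hU : fU f \subset pts m by rewrite eU subsetDl.
by rewrite /h (two_lineV Hq finj hV) (two_lineU Hq finj hU).
Qed.

End Plane.

Lemma binN2 N : 2 * 'C(N, 2) = N * N.-1.
Proof. by rewrite mulnC -[2]/(2`!) bin_ffact ffactnS ffactn1. Qed.

Theorem theorem3p5 (q : nat) (P L : finType) (inc : P -> L -> bool) :
  proj_plane q inc ->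
  (* (a) n = q *)
  (2 <= q -> n_pi inc (Kbip q q) = 'C(q ^ 2 + q + 1, 2)) /\
  (* (b) 2 <= n < q, all embeddings have phi(V) collinear *)
  (forall n : nat, 2 <= n -> n < q ->
     (forall f : {ffun ('I_n + 'I_q)%type -> P},
        f \in embeddings inc (Kbip n q) ->
        exists l : L, forall v : 'I_q, inc (f (inr v)) l) ->
     n_pi inc (Kbip n q) = 2 * 'C(q ^ 2 + q + 1, 2) * 'C(q, n)) /\
  (* (c) n = q - 1 *)
  (forall n : nat, 2 <= n -> n = q - 1 ->
     (forall f : {ffun ('I_n + 'I_q)%type -> P},
        f \in embeddings inc (Kbip n q) ->
        exists l : L, forall v : 'I_q, inc (f (inr v)) l) /\
     n_pi inc (Kbip n q) = q ^ 2 * (q + 1) * (q ^ 2 + q + 1)).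
Proof.
move=> HP.
have cL := card_L HP.
have : 0 < #|L| by rewrite cL addn1.
case/card_gt0P => l0 _.
split; [|split].
- by move=> Hq; rewrite (count_a HP l0 Hq) cL.
- move=> n Hn Hnq Hcol.
  by rewrite (count_b HP l0 Hn Hnq Hcol) cL binN2.
- move=> n Hn Hnq.
  have Hq : 1 < q by lia.
  have Hcol : forall f : {ffun ('I_n + 'I_q)%type -> P},
      f \in embeddings inc (Kbip n q) -> exists l : L, forall v : 'I_q, inc (f (inr v)) l.
    move=> f /(embP HP) G; apply: (collinear HP Hn Hq _ G); lia.
  split => //.
  have Hlt : n < q by lia.
  rewrite (count_b HP l0 Hn Hlt Hcol) cL Hnq bin_sub; last by lia.
  rewrite bin1 addn1 /=.
  nia.
Qed.
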